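(* Let $\mathcal F$ be any family of linear functionals on $\mathbb R^n$ and $\Sigma_{\mathcal F}=\bigcap_{\ell\in\mathcal F}\{\mathbf v\in\mathbb R^n:\ \ell(\mathbf v)\ge0\}$. If a solution of system (CSF) has $\mathbf v_i(0)\in\Sigma_{\mathcal F}$ for all $i$, then $\mathbf v_i(t)\in\Sigma_{\mathcal F}$ for all $i$ and all $t\ge0$.
   Context: Fix integers $N\ge1$, $n\ge1$, masses $m_1,\dots,m_N>0$ with $M=\sum_i m_i$, parameters $\sigma>0$, $p>0$, $\kappa\ge0$, and a communication kernel $\phi:[0,\infty)\to(0,\infty)$ that is smooth, positive and non-increasing. Write $\phi_{ij}=\phi(|\mathbf x_i-\mathbf x_j|)$, with $|\cdot|$ the Euclidean norm on $\mathbb R^n$. System (CSF) is, for $i=1,\dots,N$, $$\dot{\mathbf x}_i=\mathbf v_i,\qquad \dot{\mathbf v}_i=\sum_{j=1}^N m_j\phi_{ij}(\mathbf v_j-\mathbf v_i)+\sigma(\theta_i-|\mathbf v_i|^p)\mathbf v_i,\qquad \dot\theta_i=\kappa\sum_{j=1}^N m_j\phi_{ij}(\theta_j-\theta_i),$$ with $\mathbf x_i,\mathbf v_i\in\mathbb R^n$ and initial values $\theta_i(0)>0$; solutions are considered for $t\ge0$. *)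

(* Defs.v *)
From HB Require Import structures.
From mathcomp Require Import all_boot all_order all_algebra.
From mathcomp Require Import all_classical all_reals all_analysis.
Set Implicit Arguments. Unset Strict Implicit. Unset Printing Implicit Defensive.
Import Order.TTheory GRing.Theory Num.Theory.
Import numFieldNormedType.Exports.
Local Open Scope classical_set_scope.
Local Open Scope ring_scope.

Definition enorm (R : realType) (n : nat) (v : 'rV[R]_n) : R :=
  Num.sqrt (\sum_(k < n) v ord0 k ^+ 2).

Definition smooth (R : realType) (f : R -> R) : Prop :=
  forall (k : nat) (x : R), derivable (iter k (fun g : R -> R => derive1 g) f) x 1.

Definition comm_kernel (R : realType) (phi : R -> R) : Prop :=
  smooth phi /\ (forall r, 0 <= r -> 0 < phi r) /\
  (forall r s, 0 <= r -> r <= s -> phi s <= phi r).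

Definition lin_functional (R : realType) (n : nat) (l : 'rV[R]_n -> R) : Prop :=
  forall (a : R) (u w : 'rV[R]_n), l (a *: u + w) = a * l u + l w.

Definition SigmaF (R : realType) (n : nat) (F : set ('rV[R]_n -> R)) : set 'rV[R]_n :=
  [set v | forall l, F l -> 0 <= l v].

Definition CSF_solution (R : realType) (N n : nat) (m : 'I_N -> R)
  (sigma p kappa : R) (phi : R -> R)
  (x v : 'I_N -> R -> 'rV[R]_n) (theta : 'I_N -> R -> R) : Prop :=
  (forall i : 'I_N, {within `[0, +oo[, continuous (x i)}) /\
  (forall i : 'I_N, {within `[0, +oo[, continuous (v i)}) /\
  (forall i : 'I_N, {within `[0, +oo[, continuous (theta i)}) /\
  (forall (i : 'I_N) (t : R), 0 < t -> is_derive t 1 (x i) (v i t)) /\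
  (forall (i : 'I_N) (t : R), 0 < t -> is_derive t 1 (v i)
      (\sum_(j < N) (m j * phi (enorm (x i t - x j t))) *: (v j t - v i t)
       + (sigma * (theta i t - (enorm (v i t)) `^ p)) *: v i t)) /\
  (forall (i : 'I_N) (t : R), 0 < t -> is_derive t 1 (theta i)
      (kappa * \sum_(j < N) m j * phi (enorm (x i t - x j t)) * (theta j t - theta i t))).

(* Main.v *)
Require Import Defs.
Set Warnings "-all".
From HB Require Import structures.
From mathcomp Require Import all_boot all_order all_algebra.
From mathcomp Require Import all_classical all_reals all_analysis.
From mathcomp Require Import ring lra.
Import Order.TTheory GRing.Theory Num.Theory.
Import numFieldNormedType.Exports.
Local Open Scope classical_set_scope.
Local Open Scope ring_scope.
Lemma lin0 (R : realType) n (l : 'rV[R]_n -> R) : lin_functional l -> l 0 = 0.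
Proof.
move=> H; have := H 1 0 0; rewrite scaler0 addr0 mul1r => /eqP.
by rewrite -subr_eq subrr eq_sym => /eqP.
Qed.

Lemma linD (R : realType) n (l : 'rV[R]_n -> R) : lin_functional l ->
  forall u w, l (u + w) = l u + l w.
Proof. by move=> H u w; rewrite -[u in LHS]scale1r H mul1r. Qed.

Lemma linZ (R : realType) n (l : 'rV[R]_n -> R) : lin_functional l ->
  forall a u, l (a *: u) = a * l u.
Proof. by move=> H a u; rewrite -[_ *: u]addr0 H lin0 // addr0. Qed.

Lemma lin_sum (R : realType) n (l : 'rV[R]_n -> R) : lin_functional l ->
  forall (I : Type) (r : seq I) (P : pred I) (F : I -> 'rV[R]_n),
  l (\sum_(i <- r | P i) F i) = \sum_(i <- r | P i) l (F i).
Proof. by move=> H I r P F; elim/big_rec2: _ => [|i x y _ <-]; [exact: lin0|exact: linD]. Qed.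

Lemma linB (R : realType) n (l : 'rV[R]_n -> R) : lin_functional l ->
  forall u w, l (u - w) = l u - l w.
Proof. by move=> H u w; rewrite linD // -scaleN1r linZ // mulN1r. Qed.

Lemma lin_repr (R : realType) n (l : 'rV[R]_n -> R) : lin_functional l ->
  forall u, l u = \sum_(k < n) u ord0 k * l (delta_mx ord0 k).
Proof.
move=> H u; rewrite [u in LHS]row_sum_delta lin_sum //.
by apply: eq_bigr => k _; rewrite linZ.
Qed.

Lemma is_derive_coord (R : realType) n (f : R -> 'rV[R]_n) (t : R) (df : 'rV[R]_n) (k : 'I_n) :
  is_derive t 1 f df -> is_derive t 1 (fun s => f s ord0 k) (df ord0 k).
Proof.
move=> [Hd Heq].
have Hk := (derivable_mxP f t 1).1 Hd ord0 k.
apply: DeriveDef => //.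
by rewrite -Heq derive_mx // mxE.
Qed.

Lemma is_derive_lin (R : realType) n (l : 'rV[R]_n -> R) (f : R -> 'rV[R]_n) (t : R) (df : 'rV[R]_n) :
  lin_functional l -> is_derive t 1 f df -> is_derive t 1 (fun s => l (f s)) (l df).
Proof.
move=> H Hd.
have -> : (fun s => l (f s)) = \sum_(k < n) (fun s => f s ord0 k * l (delta_mx ord0 k)).
  apply/funext => s; rewrite lin_repr // fct_sumE //.
rewrite lin_repr //.
apply: is_derive_sum => k.
have := is_deriveM (@is_derive_coord R n f t df k Hd) (is_derive_cst (l (delta_mx ord0 k)) t 1).
move=> HH. rewrite scaler0 add0r in HH. rewrite mulrC. exact: HH.
Qed.
Lemma is_derive_sqmin (R : realType) (f : R -> R) (t d : R) :
  is_derive t 1 f d ->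
  is_derive t 1 (fun s => Num.min (f s) 0 ^+ 2) (2 * Num.min (f t) 0 * d).
Proof.
move=> Hd.
have cf : {for t, continuous f}.
  by apply: differentiable_continuous; apply/derivable1_diffP; case: Hd.
have [ft0|ft0|ft0] := ltgtP (f t) 0.
- have H2 := is_deriveX 2 Hd.
  apply: (near_eq_is_derive _ H2).
  near=> s.
  rewrite /= min_l; first by rewrite expr2 [RHS]expr2.
  near: s. by apply: filterS (cvgr_lt (f t) cf 0 ft0) => s /ltW.
- rewrite mulr0 mul0r.
  apply: (near_eq_is_derive _ (is_derive_cst 0 t 1)).
  near=> s.
  rewrite /= min_r ?expr2 ?mulr0 //.
  near: s. by apply: filterS (cvgr_gt (f t) cf 0 ft0) => s /ltW.
- rewrite ft0 mulr0 mul0r.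
  have Hq : (fun h : R => h^-1 *: (f (h *: 1 + t) - f t)) @ 0^' --> d.
    by case: Hd => Hder <-; exact: Hder.
  have HB : (fun h : R => `|h| * ((h^-1 *: (f (h *: 1 + t) - f t)) * (h^-1 *: (f (h *: 1 + t) - f t)))) @ 0^' --> 0.
    have Hn : (fun h : R => `|h|) @ 0^' --> (0:R).
      have Hid : (fun h : R => h) @ 0^' --> (0:R) by exact: nbhs_dnbhs.
      have := cvg_norm Hid; rewrite normr0; exact.
    have := cvgM Hn (cvgM Hq Hq); rewrite mul0r; exact.
  have Hc : (fun h : R => h^-1 *: ((fun s => Num.min (f s) 0 ^+ 2) (h *: 1 + t) - Num.min (f t) 0 ^+ 2)) @ 0^' --> 0.
    apply: (@squeeze_cvgr _ _ _ _ (fun h => - (`|h| * ((h^-1 *: (f (h *: 1 + t) - f t)) * (h^-1 *: (f (h *: 1 + t) - f t)))))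
      (fun h => `|h| * ((h^-1 *: (f (h *: 1 + t) - f t)) * (h^-1 *: (f (h *: 1 + t) - f t))))); last exact: HB.
      apply: nearW => h /=.
      rewrite ft0 subr0 minxx expr0n subr0 /= -ler_norml.
      set u := f (h *: 1 + t).
      have key : Num.min u 0 ^+ 2 <= u ^+ 2.
        by case: (leP u 0) => hu; rewrite ?lexx // expr0n sqr_ge0.
      have [->|h0] := eqVneq h 0.
        by rewrite invr0 !scale0r normr0 mul0r.
      have nh : `|h| != 0 by rewrite normr_eq0.
      have -> : `|h| * (h^-1 *: u * (h^-1 *: u)) = `|h|^-1 * u ^+ 2.
        have hh : h * h = `|h| * `|h|.
          by rewrite -normrM ger0_norm // -expr2 sqr_ge0.
        rewrite /GRing.scale /= -[h^-1 * u * _]mulrACA -invfM hh invfM.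
        rewrite expr2; field; exact: nh.
      rewrite /GRing.scale /= normrM normfV ger0_norm ?sqr_ge0 //.
      by rewrite ler_wpM2l // invr_ge0 normr_ge0.
    have H0 := cvgN HB; rewrite oppr0 in H0; exact: H0.
  apply: DeriveDef.
    by apply/cvg_ex; exists 0; exact: Hc.
  exact: cvg_lim Hc.
Unshelve. all: by end_near.
Qed.
Lemma wc_comp (R : realType) {U : topologicalType} (A : set R) (f : R -> U) (g : U -> R) :
  {within A, continuous f} -> continuous g -> {within A, continuous (fun s => g (f s))}.
Proof. move=> cf cg x; apply: continuous_comp; [exact: cf | exact: cg]. Qed.

Lemma wc_mul (R : realType) (A : set R) (f g : R -> R) :
  {within A, continuous f} -> {within A, continuous g} ->
  {within A, continuous (fun s => f s * g s)}.
Proof. move=> cf cg x; exact: (continuousM (cf x) (cg x)). Qed.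

Lemma wc_add (R : realType) (A : set R) (f g : R -> R) :
  {within A, continuous f} -> {within A, continuous g} ->
  {within A, continuous (fun s => f s + g s)}.
Proof. move=> cf cg x; exact: (continuousD (cf x) (cg x)). Qed.

Lemma wc_cst (R : realType) (A : set R) (c : R) : {within A, continuous (fun _ : R => c)}.
Proof. by move=> x; exact: cvg_cst. Qed.

Lemma wc_sum (R : realType) (A : set R) n (h : 'I_n -> R -> R) :
  (forall i, {within A, continuous (h i)}) ->
  {within A, continuous (fun s => \sum_(i < n) h i s)}.
Proof.
elim: n h => [|n IH] h ch.
  have -> : (fun s => \sum_(i < 0) h i s) = (fun _ => 0) by apply/funext => s; rewrite big_ord0.
  exact: wc_cst.
have -> : (fun s => \sum_(i < n.+1) h i s) =
  (fun s => \sum_(i < n) h (widen_ord (leqnSn n) i) s + h ord_max s).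
  by apply/funext => s; rewrite big_ord_recr.
apply: wc_add; last exact: ch.
exact: (IH (fun i => h (widen_ord (leqnSn n) i))).
Qed.
Lemma minG1 (R : realType) (u w : R) :
  Num.min u 0 * (w - u) <= Num.min u 0 ^+ 2 + Num.min w 0 ^+ 2.
Proof.
case: (leP u 0) => hu; case: (leP w 0) => hw; rewrite ?mul0r ?expr2; nra.
Qed.

Lemma minG2 (R : realType) (u : R) : Num.min u 0 * u = Num.min u 0 ^+ 2.
Proof. by case: (leP u 0) => hu; rewrite expr2 ?mul0r ?mulr0. Qed.

Lemma is_derive_expNK (R : realType) (K s : R) :
  is_derive s 1 (fun s => expR (- (K * s))) (expR (- (K * s)) * - K).
Proof.
have Hg : is_derive s 1 (fun s : R => - (K * s)) (- K).
  have := is_deriveN (is_deriveM (is_derive_cst K s 1) (is_derive_id s 1)).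
  move=> HH. have E : - ((cst K s)%:A + s *: 0) = - K by rewrite scaler0 addr0 /cst /GRing.scale /= mulr1.
  by rewrite E in HH.
exact: (is_derive1_comp (is_derive_expR _) Hg).
Qed.

Lemma cont_sqmin (R : realType) : continuous (fun y : R => Num.min y 0 ^+ 2).
Proof.
move=> y; apply: differentiable_continuous; apply/derivable1_diffP.
by case: (@is_derive_sqmin R id y 1 (is_derive_id y 1)).
Qed.

Lemma cont_expNK (R : realType) (K : R) : continuous (fun s : R => expR (- (K * s))).
Proof.
move=> y; apply: differentiable_continuous; apply/derivable1_diffP.
by case: (@is_derive_expNK R K y).
Qed.

Arguments lin0 {R n l}.
Arguments linD {R n l}.
Arguments linZ {R n l}.
Arguments linB {R n l}.
Arguments lin_sum {R n l}.
Arguments lin_repr {R n l}.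
Arguments is_derive_lin {R n l f t df}.
Arguments is_derive_coord {R n f t df}.
Arguments is_derive_sqmin {R f t d}.

Theorem lemma2p1 (R : realType) (N n : nat) (m : 'I_N -> R)
  (sigma p kappa : R) (phi : R -> R)
  (x v : 'I_N -> R -> 'rV[R]_n) (theta : 'I_N -> R -> R)
  (F : set ('rV[R]_n -> R)) :
  (1 <= N)%N -> (1 <= n)%N ->
  (forall i, 0 < m i) -> 0 < sigma -> 0 < p -> 0 <= kappa ->
  comm_kernel phi ->
  (forall l, F l -> lin_functional l) ->
  CSF_solution m sigma p kappa phi x v theta ->
  (forall i, 0 < theta i 0) ->
  (forall i, SigmaF F (v i 0)) ->
  forall i t, 0 <= t -> SigmaF F (v i t).
Proof.
move=> N1 n1 mpos sig0 p0 kap0 [_ [phipos phidec]] HF [cx [cv [cth [dx [dv dth]]]]] th0 v0 i t t0 l Fl.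
have Hl := HF l Fl.
have [tz|tpos] : t = 0 \/ 0 < t.
  by move: t0; rewrite le_eqVlt => /orP[/eqP <-|->]; [left|right].
  by rewrite tz; exact: v0.
pose y j s := l (v j s).
pose c k := l (delta_mx ord0 k).
have yE : forall j, y j = (fun s => \sum_(k < n) v j s ord0 k * c k).
  by move=> j; apply/funext => s; rewrite /y lin_repr.
have cy : forall j, {within `[0, +oo[, continuous (y j)}.
  move=> j; rewrite yE; apply: wc_sum => k; apply: wc_mul; last exact: wc_cst.
  move=> s; exact: (continuous_comp (cv j s) (@coord_continuous R 1 n ord0 k (v j s))).
pose a (j k : 'I_N) (s : R) := m k * phi (enorm (x j s - x k s)).
pose b (j : 'I_N) (s : R) := sigma * (theta j s - (enorm (v j s)) `^ p).
have dy : forall j s, 0 < s -> is_derive (s : R) (1 : R) (y j)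
    (\sum_(k < N) a j k s * (y k s - y j s) + b j s * y j s).
  move=> j s s0; have := is_derive_lin Hl (dv j s s0).
  rewrite linD // lin_sum // linZ // (eq_bigr (fun k => a j k s * (y k s - y j s))) //.
  by move=> k _; rewrite (linZ Hl) (linB Hl).
have [Bd [Bd0 HBd]] : exists Bd, 0 <= Bd /\ forall j s, 0 <= s <= t -> theta j s <= Bd.
  pose Th s := \sum_(j < N) `|theta j s|.
  have cTh : {within `[0, t], continuous Th}.
    have cT : {within `[0, +oo[, continuous Th}.
      apply: wc_sum => j.
      move=> s; exact: (continuous_comp (cth j s) (@norm_continuous _ R^o (theta j s))).
    apply: continuous_subspaceW cT.
    by move=> s; rewrite /= !in_itv /= => /andP[-> _].
  have [c0 c0in Hc] := EVT_max (ltW tpos) cTh.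
  exists (Th c0); split; first by apply: sumr_ge0 => j _; exact: normr_ge0.
  move=> j s hs; apply: (le_trans (ler_norm _)).
  apply: (le_trans _ (Hc s _)); last by rewrite in_itv.
  by rewrite /Th (bigD1 j) //= lerDl; apply: sumr_ge0 => k _; exact: normr_ge0.
pose Msum := \sum_(k < N) m k * phi 0.
have aB : forall j k s, 0 <= a j k s <= m k * phi 0.
  move=> j k s; have en : 0 <= enorm (x j s - x k s) by exact: sqrtr_ge0.
  apply/andP; split.
    by apply: mulr_ge0; [exact: ltW | exact: ltW (phipos _ en)].
  by apply: ler_wpM2l; [exact: ltW | exact: phidec].
have Msum0 : 0 <= Msum.
  by apply: sumr_ge0 => k _; apply: mulr_ge0; [exact: ltW | exact: ltW (phipos _ (lexx 0))].
pose K := 2 * N%:R * (2 * Msum + sigma * Bd).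
have K0 : 0 <= K.
  apply: mulr_ge0; first by apply: mulr_ge0.
  by apply: addr_ge0; [apply: mulr_ge0 | apply: mulr_ge0 => //; exact: ltW].
pose nn j s := Num.min (y j s) 0.
pose S s := \sum_(j < N) nn j s ^+ 2.
pose E s := expR (- (K * s)).
pose W s := S s * E s.
pose yd j s := \sum_(k < N) a j k s * (y k s - y j s) + b j s * y j s.
pose Sd s := \sum_(j < N) 2 * nn j s * yd j s.
have S0 : forall s, 0 <= S s by move=> s; apply: sumr_ge0 => j _; exact: sqr_ge0.
have dS : forall s, 0 < s -> is_derive (s : R) (1 : R) S (Sd s).
  move=> s s0.
  have -> : S = \sum_(j < N) (fun r => nn j r ^+ 2).
    by apply/funext => r; rewrite fct_sumE.
  by apply: is_derive_sum => j; exact: is_derive_sqmin (dy j s s0).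
have key : forall s, 0 < s <= t -> Sd s <= K * S s.
  move=> s /andP[s0 st].
  have nS : forall k, nn k s ^+ 2 <= S s.
    by move=> k; rewrite /S (bigD1 k) //= lerDl; apply: sumr_ge0 => k' _; exact: sqr_ge0.
  have hi : forall j, 2 * nn j s * yd j s <= 2 * (2 * Msum + sigma * Bd) * S s.
    move=> j.
    have h1 : \sum_(k < N) a j k s * (nn j s * (y k s - y j s)) <= Msum * (2 * S s).
      rewrite /Msum mulr_suml; apply: ler_sum => k _.
      have /andP[a0 aM] := aB j k s.
      apply: (@le_trans _ _ (a j k s * (2 * S s))).
        apply: ler_wpM2l => //.
        have := @minG1 R (y j s) (y k s); have := nS j; have := nS k; rewrite /nn; lra.
      apply: ler_wpM2r aM; have := S0 s; lra.
    have h2 : b j s * (nn j s * y j s) <= sigma * Bd * S s.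
      rewrite /nn (@minG2 R).
      have bB : b j s <= sigma * Bd.
        rewrite /b; apply: ler_wpM2l; first exact: ltW.
        have := HBd j s; rewrite (ltW s0) st => /(_ isT) hb.
        have := @powR_ge0 R (enorm (v j s)) p; lra.
      apply: (@le_trans _ _ (sigma * Bd * Num.min (y j s) 0 ^+ 2)).
        by apply: ler_wpM2r => //; exact: sqr_ge0.
      apply: ler_wpM2l; last exact: nS.
      by apply: mulr_ge0 => //; exact: ltW.
    have Ej : nn j s * yd j s = \sum_(k < N) a j k s * (nn j s * (y k s - y j s)) + b j s * (nn j s * y j s).
      rewrite /yd mulrDr mulr_sumr; congr (_ + _); last by ring.
      by apply: eq_bigr => k _; ring.
    rewrite -mulrA Ej; nra.
  rewrite /Sd; apply: (le_trans (ler_sum _ (fun j _ => hi j))).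
  rewrite sumr_const card_ord -mulr_natl /K.
  by rewrite le_eqVlt; apply/orP; left; apply/eqP; ring.
have dW : forall s, 0 < s -> is_derive (s : R) (1 : R) W (S s *: (E s * - K) + E s *: Sd s).
  move=> s s0; have H := is_deriveM (dS s s0) (@is_derive_expNK R K s). exact: H.
have cW : {within `[0, t], continuous W}.
  have cW' : {within `[0, +oo[, continuous W}.
    apply: wc_mul; last exact: continuous_subspaceT (@cont_expNK R K).
    apply: wc_sum => j.
    move=> s; exact: (continuous_comp (cy j s) (@cont_sqmin R (y j s))).
  apply: continuous_subspaceW cW'.
  by move=> s; rewrite /= !in_itv /= => /andP[-> _].
have mono : forall r s, 0 <= r -> r <= s -> s <= t -> W s <= W r.
  apply: ler0_derive1_nincr => //.
    by move=> s; rewrite in_itv => /andP[s0 st]; case: (dW s s0).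
  move=> s; rewrite in_itv => /andP[s0 st].
  rewrite derive1E (@derive_val _ _ _ _ _ _ _ (dW s s0)).
  have hk : Sd s <= K * S s by apply: key; apply/andP; split; [exact: s0 | exact: ltW st].
  have Ep : 0 < E s by exact: expR_gt0.
  rewrite /GRing.scale /=; nra.
have W0 : W 0 = 0.
  rewrite /W /S big1 ?mul0r // => j _.
  rewrite /nn min_r ?expr0n //.
  exact: (v0 j l Fl).
have Wt := mono 0 t (lexx 0) t0 (lexx t); rewrite W0 in Wt.
have Et : 0 < E t by exact: expR_gt0.
have St : S t <= 0 by rewrite /W in Wt; nra.
have Si : nn i t ^+ 2 <= S t.
  by rewrite /S (bigD1 i) //= lerDl; apply: sumr_ge0 => k _; exact: sqr_ge0.
rewrite leNgt; apply/negP => hlt.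
have : nn i t = y i t by rewrite /nn min_l // ltW.
move=> hE; rewrite hE in Si.
have : 0 < y i t ^+ 2 by rewrite expr2 nmulr_rgt0.
rewrite /y in Si *; lra.
Qed.
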